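(* Let $X$ be a noncommutative space embedded in $\mathcal A^m$ and $e=\tilde E^j\ast E_j$. Equip $TX=\mathcal A^m\ast e$ and $\tilde TX=e\ast{}^m\!\mathcal A$ with the canonical connections $\nabla_i\zeta=\partial_i\zeta-\zeta\ast\partial_ie$ and $\tilde\nabla_i\xi=\partial_i\xi-\partial_i(e)\ast\xi$. Then for all $i,j$: $$\nabla_iE_j=\Gamma_{ij}^k\ast E_k,\qquad \tilde\nabla_i\tilde E^j=-\tilde E^k\ast\Gamma_{ki}^j,$$ and equivalently $\nabla_iE^j=-\tilde\Gamma^j_{ik}\ast E^k$ and $\tilde\nabla_i(E_j)^t=(E_k)^t\ast\tilde\Gamma^k_{ij}$, where $E^j=g^{jk}\ast E_k$.
   Context: $\mathcal A$ denotes the Moyal algebra: for $U\subset\mathbb R^n$ open with coordinates $t$ and $\hbar$ a formal real indeterminate, $\mathcal A$ is the set of formal power series $\sum_{i\ge0}f_i\hbar^i$ with real smooth coefficients on $U$, with product $(f\ast g)(t)=\lim_{t'\to t}\exp\big(\hbar\sum_{i,j}\theta_{ij}\frac{\partial}{\partial t^i}\frac{\partial}{\partial t'^j}\big)f(t)g(t')$ for a fixed constant real skew-symmetric $\theta$ (associative, unital; $\partial_i=\partial/\partial t^i$ are derivations, acting entrywise on matrices). Matrices over $\mathcal A$ are multiplied using $\ast$; $\mathcal A^m$ row vectors, ${}^m\!\mathcal A$ column vectors. Einstein summation. For $X=(X^1,\dots,X^m)\in\mathcal A^m$, $g_{ij}=\sum_\alpha\partial_iX^\alpha\ast\partial_jX^\alpha$;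 $X$ is a noncommutative space embedded in $\mathcal A^m$ if $(g_{ij})$ is invertible, inverse $(g^{ij})$. $E_i=\partial_iX$, $(E_i)^t$ its transpose, $\tilde E^i=(E_j)^t\ast g^{ji}$. Define ${}_c\Gamma_{ijl}=\tfrac12(\partial_ig_{jl}+\partial_jg_{li}-\partial_lg_{ji})$, $\Upsilon_{ijl}=\tfrac12(\partial_i(E_j)\ast(E_l)^t-E_l\ast\partial_i(E_j)^t)$, $\Gamma_{ijl}={}_c\Gamma_{ijl}+\Upsilon_{ijl}$, $\tilde\Gamma_{ijl}={}_c\Gamma_{ijl}-\Upsilon_{ijl}$, $\Gamma_{ij}^k=\Gamma_{ijl}\ast g^{lk}$, $\tilde\Gamma_{ij}^k=g^{kl}\ast\tilde\Gamma_{ijl}$. *)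

(* Defs.v *)
(* The Moyal algebra is abstracted to an associative unital
   R-algebra A with n pairwise commuting R-linear derivations d i. *)
From HB Require Import structures.
From mathcomp Require Import all_boot all_order all_algebra.
Set Implicit Arguments. Unset Strict Implicit. Unset Printing Implicit Defensive.
Import GRing.Theory.
Local Open Scope ring_scope.

Definition derivation_family (R : realFieldType) (A : algType R) (n : nat)
  (d : 'I_n -> A -> A) : Prop :=
  (forall i (a b : A), d i (a + b) = d i a + d i b) /\
  (forall i (c : R) (a : A), d i (c *: a) = c *: d i a) /\
  (forall i (a b : A), d i (a * b) = d i a * b + a * d i b) /\
  (forall i j (a : A), d i (d j a) = d j (d i a)).

Section NCSpace.
Variables (R : realFieldType) (A : algType R) (n m : nat).
Variable d : 'I_n -> A -> A.
Variable X : 'rV[A]_m.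
Variable ginv : 'M[A]_n.

Definition dmx (i : 'I_n) (p q : nat) (M : 'M[A]_(p, q)) : 'M[A]_(p, q) :=
  map_mx (d i) M.

Definition E (i : 'I_n) : 'rV[A]_m := dmx i X.

Definition metric : 'M[A]_n := \matrix_(i, j) (E i *m (E j)^T) ord0 ord0.

Definition Et (i : 'I_n) : 'cV[A]_m := \sum_j (E j)^T *m (ginv j i)%:M.

Definition eproj : 'M[A]_m := \sum_j Et j *m E j.

Definition nabla (i : 'I_n) (z : 'rV[A]_m) : 'rV[A]_m :=
  dmx i z - z *m dmx i eproj.
Definition nablat (i : 'I_n) (x : 'cV[A]_m) : 'cV[A]_m :=
  dmx i x - dmx i eproj *m x.

Definition cGamma (i j l : 'I_n) : A :=
  2^-1 *: (d i (metric j l) + d j (metric l i) - d l (metric j i)).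
Definition Ups (i j l : 'I_n) : A :=
  2^-1 *: ((dmx i (E j) *m (E l)^T) ord0 ord0
           - (E l *m dmx i (E j)^T) ord0 ord0).
Definition Gamma (i j l : 'I_n) : A := cGamma i j l + Ups i j l.
Definition Gammat (i j l : 'I_n) : A := cGamma i j l - Ups i j l.

Definition GammaU (i j k : 'I_n) : A := \sum_l Gamma i j l * ginv l k.
Definition GammatU (i j k : 'I_n) : A := \sum_l ginv k l * Gammat i j l.

Definition Eup (j : 'I_n) : 'rV[A]_m := \sum_k (ginv j k)%:M *m E k.

End NCSpace.

(* Main.v *)
Require Import Defs.
From HB Require Import structures.
From mathcomp Require Import all_boot all_order all_algebra.
Set Implicit Arguments. Unset Strict Implicit. Unset Printing Implicit Defensive.
Import GRing.Theory.
Local Open Scope ring_scope.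

Lemma row_sum_scalar (A : nzRingType) p n q (C : 'M[A]_(p, n)) (M : 'M[A]_(n, q)) j :
  \sum_k (C j k)%:M *m row k M = row j (C *m M).
Proof.
apply/matrixP => x y; rewrite summxE !mxE.
apply: eq_bigr => k _; rewrite mul_scalar_mx !mxE.
done.
Qed.

Lemma col_sum_scalar (A : nzRingType) p n q (C : 'M[A]_(n, q)) (M : 'M[A]_(p, n)) j :
  \sum_k col k M *m (C k j)%:M = col j (M *m C).
Proof.
apply/matrixP => x y; rewrite summxE !mxE.
apply: eq_bigr => k _; rewrite !mxE.
rewrite (big_ord_recl 0) big_ord0 addr0 !mxE (ord1 y) eqxx mulr1n.
done.
Qed.

Lemma derivs (R : realFieldType) (A : algType R) (n : nat)
  (d : 'I_n -> A -> A) (hd : derivation_family d) k :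
  d k 0 = 0 /\ d k 1 = 0 /\ (forall a, d k (- a) = - d k a) /\
  (forall I (r : seq I) (P : pred I) (F : I -> A),
      d k (\sum_(x <- r | P x) F x) = \sum_(x <- r | P x) d k (F x)).
Proof.
have [hadd [hscal [hmul hcomm]]] := hd.
have d0 : d k 0 = 0.
  by apply: (addrI (d k 0)); rewrite addr0 -hadd addr0.
have d1 : d k 1 = 0.
  apply: (addrI (d k 1)); rewrite addr0.
  by rewrite -{3}(mulr1 1) hmul mulr1 mul1r.
split=> //; split=> //; split.
  move=> a; apply/eqP; rewrite -addr_eq0 -hadd addrC subrr d0 //.
move=> I r P F; exact: (big_morph (d k) (hadd k) d0).
Qed.

Lemma dmx_lemmas (R : realFieldType) (A : algType R) (n : nat)
  (d : 'I_n -> A -> A) (hd : derivation_family d) k :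
  (forall p q r (M : 'M[A]_(p, q)) (N : 'M[A]_(q, r)),
      dmx d k (M *m N) = dmx d k M *m N + M *m dmx d k N) /\
  (forall p q (M N : 'M[A]_(p, q)), dmx d k (M + N) = dmx d k M + dmx d k N) /\
  (forall p q (M : 'M[A]_(p, q)), dmx d k (- M) = - dmx d k M) /\
  (forall p q (M : 'M[A]_(p, q)), dmx d k M^T = (dmx d k M)^T) /\
  (forall p, dmx d k (1%:M : 'M[A]_p) = 0) /\
  (forall p, dmx d k (0 : 'M[A]_p) = 0).
Proof.
have [hadd [hscal [hmul hcomm]]] := hd.
have [d0 [d1 [dN dS]]] := derivs hd k.
split.
  move=> p q r M N; apply/matrixP => x y; rewrite !mxE dS -big_split.
  by apply: eq_bigr => t _; rewrite hmul !mxE.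
split; first by move=> p q M N; apply/matrixP => x y; rewrite !mxE hadd.
split; first by move=> p q M; apply/matrixP => x y; rewrite !mxE dN.
split; first by move=> p q M; apply/matrixP => x y; rewrite !mxE.
split; first by move=> p; apply/matrixP => x y; rewrite !mxE; case: (x == y); rewrite ?mulr1n ?mulr0n.
by move=> p; apply/matrixP => x y; rewrite !mxE.
Qed.

Lemma Gamma_eq (R : realFieldType) (A : algType R) (n m : nat)
  (d : 'I_n -> A -> A) (X : 'rV[A]_m) (hd : derivation_family d) i j l :
  Gamma d X i j l = \sum_a d i (d j (X 0 a)) * d l (X 0 a) /\
  Gammat d X i j l = \sum_a d l (X 0 a) * d i (d j (X 0 a)).
Proof.
have [hadd [hscal [hmul hcomm]]] := hd.
pose aa i j l := \sum_a d i (d j (X 0 a)) * d l (X 0 a).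
pose bb i j l := \sum_a d l (X 0 a) * d i (d j (X 0 a)).
have aaC i' j' l' : aa i' j' l' = aa j' i' l'.
  by apply: eq_bigr => a _; rewrite hcomm.
have bbC i' j' l' : bb i' j' l' = bb j' i' l'.
  by apply: eq_bigr => a _; rewrite hcomm.
have dg i' j' l' : d i' (metric d X j' l') = aa i' j' l' + bb i' l' j'.
  have [_ [_ [_ dS]]] := derivs hd i'.
  rewrite !mxE dS -big_split; apply: eq_bigr => a _; rewrite !mxE hmul //.
have Ua : (dmx d i (E d X j) *m (E d X l)^T) 0 0 = aa i j l.
  by rewrite !mxE; apply: eq_bigr => a _; rewrite !mxE.
have Ub : (E d X l *m dmx d i (E d X j)^T) 0 0 = bb i j l.
  by rewrite !mxE; apply: eq_bigr => a _; rewrite !mxE.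
have cG : cGamma d X i j l = 2^-1 *: (aa i j l + bb i j l).
  rewrite /cGamma !dg (aaC j l i) (bbC i l j) (bbC j i l); congr (_ *: _).
  by rewrite opprD addrACA addrA addrA addrNK addrAC addrK.
have two : (2^-1 : R) *+ 2 = 1.
  by rewrite -(mulr_natl (2^-1 : R) 2) mulfV // Num.Theory.pnatr_eq0.
rewrite /Gammat /Gamma /Ups Ua Ub cG; split.
  by rewrite -scalerDr addrACA subrr addr0 -mulr2n -scalerMnr scalerMnl two scale1r.
by rewrite -scalerBr opprB (addrC (aa i j l)) -addrA (addrCA (aa i j l)) subrr addr0 -mulr2n -scalerMnr scalerMnl two scale1r.
Qed.

Lemma mulmx_colrow (A : nzRingType) p n q (M : 'M[A]_(p, n)) (N : 'M[A]_(n, q)) :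
  M *m N = \sum_k col k M *m row k N.
Proof.
apply/matrixP => x y; rewrite summxE !mxE; apply: eq_bigr => k _.
by rewrite !mxE (big_ord_recl 0) big_ord0 addr0 !mxE.
Qed.

Unset Implicit Arguments.

Theorem lemma4p3 (R : realFieldType) (A : algType R) (n m : nat)
  (d : 'I_n -> A -> A) (X : 'rV[A]_m) (ginv : 'M[A]_n)
  (hd : derivation_family d)
  (hginv_r : metric d X *m ginv = 1%:M)
  (hginv_l : ginv *m metric d X = 1%:M) :
  forall i j : 'I_n,
    nabla d X ginv i (E d X j) = \sum_k (GammaU d X ginv i j k)%:M *m E d X k /\
    nablat d X ginv i (Et d X ginv j) = - \sum_k Et d X ginv k *m (GammaU d X ginv k i j)%:M /\
    nabla d X ginv i (Eup d X ginv j) = - \sum_k (GammatU d X ginv i k j)%:M *m Eup d X ginv k /\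
    nablat d X ginv i (E d X j)^T = \sum_k (E d X k)^T *m (GammatU d X ginv i j k)%:M.
Proof.
move=> i j.
have [hadd [hscal [hmul hcomm]]] := hd.
have [dM [dD [dN [dTr [d1 d0]]]]] := dmx_lemmas hd i.
pose EE : 'M[A]_(n, m) := \matrix_(k, a) d k (X 0 a).
have rowE k : row k EE = E d X k by apply/matrixP => x y; rewrite !mxE ?(ord1 x) ?(ord1 y).
have colET k : col k EE^T = (E d X k)^T by apply/matrixP => x y; rewrite !mxE ?(ord1 x) ?(ord1 y).
pose Dm := dmx d i EE.
have rowD k : row k Dm = dmx d i (E d X k) by apply/matrixP => x y; rewrite !mxE ?(ord1 x) ?(ord1 y).
have colDT k : col k Dm^T = (dmx d i (E d X k))^T by apply/matrixP => x y; rewrite !mxE ?(ord1 x) ?(ord1 y).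
have gE : metric d X = EE *m EE^T.
  by apply/matrixP => x y; rewrite !mxE; apply: eq_bigr => a _; rewrite !mxE.
have EtE k : Et d X ginv k = col k (EE^T *m ginv).
  rewrite -col_sum_scalar; apply: eq_bigr => l _; by rewrite colET.
have EupE k : Eup d X ginv k = row k (ginv *m EE).
  rewrite -row_sum_scalar; apply: eq_bigr => l _; by rewrite rowE.
have eE : eproj d X ginv = EE^T *m ginv *m EE.
  rewrite mulmx_colrow; apply: eq_bigr => l _; by rewrite EtE rowE.
pose e := eproj d X ginv.
pose T := EE^T *m ginv.
have eT : e = T *m EE by rewrite /e eE.
have H4 : EE *m T = 1%:M by rewrite /T mulmxA -gE hginv_r.
have H2 : EE *m e = EE by rewrite eT mulmxA H4 mul1mx.
have H3 : e *m EE^T = EE^T by rewrite eT /T -!mulmxA -gE hginv_l mulmx1.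
have HT : e *m T = T by rewrite eT -mulmxA H4 mulmx1.
pose dT := dmx d i T.
pose de := dmx d i e.
have dH4 : Dm *m T + EE *m dT = 0 by rewrite -dM H4 d1.
have dH2 : Dm *m e + EE *m de = Dm by rewrite -dM H2.
have dH3 : de *m EE^T + e *m Dm^T = Dm^T by rewrite -dTr -dM H3.
have dHT : de *m T + e *m dT = dT by rewrite -dM HT.
have dg : dmx d i (metric d X) = Dm *m EE^T + EE *m Dm^T by rewrite gE dM dTr.
have dG : dmx d i ginv = - (ginv *m (Dm *m EE^T + EE *m Dm^T) *m ginv).
  have h : dmx d i ginv *m metric d X + ginv *m dmx d i (metric d X) = 0.
    by rewrite -dM hginv_l d1.
  rewrite -dg -[LHS]mulmx1 -hginv_r mulmxA.
  move/eqP: h; rewrite addr_eq0 => /eqP ->.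
  by rewrite mulNmx.
have GUE1 k : GammaU d X ginv i j k = (Dm *m EE^T *m ginv) j k.
  rewrite /GammaU !mxE; apply: eq_bigr => l _; rewrite (Gamma_eq X hd _ _ _).1 !mxE.
  by congr (_ * _); apply: eq_bigr => a _; rewrite !mxE.
have GUE2 k : GammaU d X ginv k i j = (Dm *m EE^T *m ginv) k j.
  rewrite /GammaU !mxE; apply: eq_bigr => l _; rewrite (Gamma_eq X hd _ _ _).1 !mxE.
  by congr (_ * _); apply: eq_bigr => a _; rewrite !mxE hcomm.
have GtUE a b : GammatU d X ginv i a b = (ginv *m (EE *m Dm^T)) b a.
  rewrite /GammatU !mxE; apply: eq_bigr => l _; rewrite (Gamma_eq X hd _ _ _).2 !mxE.
  by congr (_ * _); apply: eq_bigr => c _; rewrite !mxE.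
split.
  have M1 : Dm - EE *m de = Dm *m EE^T *m ginv *m EE.
    by rewrite -{1}dH2 addrK eT /T !mulmxA.
  rewrite /nabla -rowD -rowE.
  under eq_bigr do rewrite GUE1 -rowE.
  rewrite row_sum_scalar -M1.
  by apply/matrixP => x y; rewrite !mxE; congr (_ - _); apply: eq_bigr => k _; rewrite !mxE.
split.
  have M2 : dT - de *m T = - (T *m (Dm *m EE^T *m ginv)).
    have h : EE *m dT = - (Dm *m T).
      by apply/eqP; rewrite -addr_eq0 addrC dH4.
    rewrite -{1}dHT (addrC (de *m T)) addrK eT -mulmxA h mulmxN -!mulmxA.
    by rewrite /T.
  rewrite /nablat EtE.
  under eq_bigr do rewrite GUE2 EtE.
  rewrite col_sum_scalar -/T.
  have -> : - col j (T *m (Dm *m EE^T *m ginv)) = col j (dT - de *m T).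
    by rewrite M2; apply/matrixP => x y; rewrite !mxE.
  by apply/matrixP => x y; rewrite !mxE; congr (_ - _); apply: eq_bigr => k _; rewrite !mxE.
split.
  have hEde : EE *m de = Dm - Dm *m e by rewrite -{1}dH2 (addrC (Dm *m e)) addrK.
  have M3 : dmx d i (ginv *m EE) - ginv *m EE *m de = - (ginv *m (EE *m Dm^T) *m (ginv *m EE)).
    rewrite dM dG -(mulmxA ginv EE de) hEde eT /T.
    rewrite !(mulmxDr, mulmxDl, mulmxN, mulNmx) !mulmxA.
    by rewrite -/Dm opprD opprB addrA (addrAC _ (ginv *m Dm)) addrK addrAC addNr add0r.
  rewrite /nabla EupE.
  under eq_bigr do rewrite GtUE EupE.
  rewrite row_sum_scalar.
  have -> : - row j (ginv *m (EE *m Dm^T) *m (ginv *m EE)) = row j (dmx d i (ginv *m EE) - ginv *m EE *m de).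
    by rewrite M3; apply/matrixP => x y; rewrite !mxE.
  by apply/matrixP => x y; rewrite !mxE; congr (_ - _); apply: eq_bigr => k _; rewrite !mxE.
have M4 : Dm^T - de *m EE^T = EE^T *m (ginv *m (EE *m Dm^T)).
  by rewrite -{1}dH3 (addrC (de *m EE^T)) addrK eT /T !mulmxA.
rewrite /nablat -colET.
under eq_bigr do rewrite GtUE -colET.
rewrite col_sum_scalar -M4.
by apply/matrixP => x y; rewrite !mxE; congr (_ - _); apply: eq_bigr => k _; rewrite !mxE.
Qed.
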